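(* Let $q$ be a prime power, $M\geq2$ an integer, $k\geq 1$, and let $f\in\mathbb{F}_q[x]$ be a SRIM polynomial of degree $2k$ such that $f(x^M)$ has a SRIM factor of degree $2k$. Let $C_f\in\mathrm{Sp}(2k,q)$ be an element with characteristic polynomial $f$. Then there exists $\alpha\in\mathrm{Sp}(2k,q)$ with $\alpha^M=C_f$.
   Context: For a monic polynomial $f$ of degree $r$ with $f(0)\neq0$, $f^*(x)=f(0)^{-1}x^rf(x^{-1})$; $f$ is self-reciprocal if $f=f^*$. SRIM means self-reciprocal irreducible monic. $\mathrm{Sp}(2k,q)$ is the symplectic group of a non-degenerate alternating form on $\mathbb{F}_q^{2k}$. *)

(* Defs.v *)
From HB Require Import structures.
From mathcomp Require Import all_boot all_order all_algebra all_field.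
Set Implicit Arguments. Unset Strict Implicit. Unset Printing Implicit Defensive.
Import GRing.Theory.
Local Open Scope ring_scope.

(* Reciprocal of a polynomial f of degree r with f(0) <> 0:
   f^*(x) = f(0)^{-1} x^r f(1/x); the coefficient list of x^r f(1/x) is the
   reversed coefficient list of f. *)
Definition recip_poly (R : fieldType) (f : {poly R}) : {poly R} :=
  (f`_0)^-1 *: Poly (rev f).

Definition SRIM (R : fieldType) (f : {poly R}) : Prop :=
  [/\ f \is monic, irreducible_poly f, f`_0 != 0 & recip_poly f = f].

(* non-degenerate alternating form on row vectors F^n: B(u,v) = u J v^T *)
Definition nondeg_alt (R : fieldType) (n : nat) (J : 'M[R]_n) : Prop :=
  [/\ forall i, J i i = 0, J^T = - J & J \in unitmx].

Definition Sp (R : fieldType) (n : nat) (J : 'M[R]_n) : {pred 'M[R]_n} :=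
  [pred A | A *m J *m A^T == J].

(* matrix power (n need not be syntactically a successor) *)
Definition mxpow (R : fieldType) (n : nat) (A : 'M[R]_n) (m : nat) : 'M[R]_n :=
  iter m (mulmx A) 1%:M.

(* Main.v *)
Require Import Defs.
From HB Require Import structures.
From mathcomp Require Import all_boot all_order all_algebra all_field.
From mathcomp Require Import ring zify.
Import GRing.Theory.
Local Open Scope ring_scope.

Lemma dvdp_comp (F : fieldType) (g a b p : {poly F}) :
  g %| a - b -> g %| (p \Po a) - (p \Po b).
Proof.
move=> H; elim/poly_ind: p => [|p c IH]; first by rewrite !comp_poly0 subr0 dvdp0.
rewrite !comp_polyD !comp_polyM !comp_polyX !comp_polyC.
have -> : ((p \Po a) * a + c%:P) - ((p \Po b) * b + c%:P) =
   ((p \Po a) - (p \Po b)) * a + (p \Po b) * (a - b) by ring.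
by apply: dvdp_add; [apply: dvdp_mulr | apply: dvdp_mull].
Qed.
Arguments dvdp_comp {F g a b} p.

Lemma dvdp_compr (F : fieldType) (g h c : {poly F}) : g %| h -> g \Po c %| h \Po c.
Proof. by case/dvdpP => q ->; rewrite comp_polyM dvdp_mull. Qed.
Arguments dvdp_compr {F g h} c.

Lemma dvdp_exp1 (F : fieldType) (g a : {poly F}) i : g %| a - 1 -> g %| a ^+ i - 1.
Proof.
move=> H; have := dvdp_comp ('X^i) H.
by rewrite !comp_Xn_poly expr1n.
Qed.
Arguments dvdp_exp1 {F g a} i.

Lemma inv_X (F : fieldType) (p : {poly F}) : p`_0 != 0 -> exists w, p %| 'X * w - 1.
Proof.
move=> h0.
have : coprimep ('X - 0%:P) p by rewrite coprimep_sym coprimep_XsubC /root horner_coef0.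
case/Bezout_eq1_coprimepP => [[u v]] /= e.
exists u; apply/dvdpP; exists (- v); rewrite subr0 in e.
have -> : 'X * u - 1 = 'X * u - (u * 'X + v * p) by rewrite e.
ring.
Qed.
Arguments inv_X {F p}.

Lemma key_inj (F : fieldType) (f g h : {poly F}) (M : nat) :
  irreducible_poly f -> (1 < size g)%N -> g %| f \Po 'X^M -> g %| h \Po 'X^M -> f %| h.
Proof.
move=> irr sg gf gh; apply/negPn/negP => nfh.
have cop : coprimep f h.
  have := dvdp_gcdl f h; have := irr (gcdp f h).
  case: (eqVneq (size (gcdp f h)) 1%N) => [s1 _ _|s1 H /(H isT) e].
  - by rewrite /coprimep s1.
  - by move: nfh; rewrite -(eqp_dvdl _ e) dvdp_gcdr.
case/Bezout_eq1_coprimepP: cop => [[u v]] /= e.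
have : g %| (u * f + v * h) \Po 'X^M.
  by rewrite comp_polyD !comp_polyM; apply: dvdp_add; apply: dvdp_mull.
rewrite e -polyC1 comp_polyC polyC1 dvdp1 => /eqP s.
by rewrite s in sg.
Qed.
Arguments key_inj {F f g h M}.

Lemma dvdpZr' (F : fieldType) (g p : {poly F}) c : g %| p -> g %| c *: p.
Proof. by move=> H; rewrite -mul_polyC dvdp_mull. Qed.

Lemma recip_dvd (F : fieldType) (g w : {poly F}) :
  g`_0 != 0 -> recip_poly g = g -> g %| 'X * w - 1 -> g %| (g \Po w).
Proof.
move=> g0 rg gw.
set d := (size g).-1.
have Hrev : Poly (rev g) = \sum_(i < size g) g`_i *: 'X^(d - i).
  have -> : Poly (rev g) = \poly_(i < size g) (rev g)`_i.
    apply/polyP => j; rewrite coef_Poly coef_poly.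
    case: ltnP => // hj; by rewrite nth_default // size_rev.
  rewrite poly_def (reindex_inj rev_ord_inj) /=.
  apply: eq_bigr => i _; have hi := ltn_ord i.
  rewrite nth_rev; last by lia.
  have -> : (size g - (size g - i.+1).+1 = i)%N.
    by rewrite subnSK // subKn // ltnW.
  congr (_ *: 'X^_); by rewrite /d -subn1 -subnDA add1n.
have HPg : g %| Poly (rev g).
  have -> : Poly (rev g) = g`_0 *: g.
    by rewrite -[X in _ *: X]rg /recip_poly scalerA mulfV // scale1r.
  exact: dvdpZr'.
have H1 : g %| (g \Po w) * 'X^d - Poly (rev g).
  rewrite Hrev comp_polyE mulr_suml -sumrB.
  apply: (big_ind (fun x => g %| x)); first exact: dvdp0.
    by move=> x y; exact: dvdp_add.
  move=> i _; rewrite -scalerAl -scalerBr; apply: dvdpZr'.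
  have hi : (i <= d)%N by have := ltn_ord i; rewrite /d; lia.
  have -> : w ^+ i * 'X^d - 'X^(d - i) = 'X^(d - i) * (('X * w) ^+ i - 1).
    rewrite -{1}(subnK hi) exprD exprMn; ring.
  apply: dvdp_mull; exact: dvdp_exp1.
have H2 : g %| (g \Po w) * 'X^d.
  by rewrite -(subrK (Poly (rev g)) ((g \Po w) * 'X^d)); apply: dvdp_add.
have H3 := dvdp_exp1 d gw.
have -> : g \Po w = (g \Po w) * 'X^d * w ^+ d - (g \Po w) * (('X * w) ^+ d - 1).
  rewrite exprMn; ring.
apply: dvdp_sub; [exact: dvdp_mulr | exact: dvdp_mull].
Qed.
Arguments recip_dvd {F g w}.

Lemma horner_mx_dvd (F : fieldType) n (A : 'M[F]_n.+1) (f q : {poly F}) :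
  horner_mx A f = 0 -> f %| q -> horner_mx A q = 0.
Proof. by move=> H /dvdpP [r ->]; rewrite rmorphM /= H mulr0. Qed.

Arguments horner_mx_dvd {F n A f q}.

Lemma horner_mx_comm (F : fieldType) n (A : 'M[F]_n.+1) (p q : {poly F}) :
  horner_mx A p * horner_mx A q = horner_mx A q * horner_mx A p.
Proof. by rewrite -!rmorphM mulrC. Qed.

Lemma horner_mx_comp (F : fieldType) n (A : 'M[F]_n.+1) (p u : {poly F}) :
  horner_mx A (p \Po u) = horner_mx (horner_mx A u) p.
Proof.
elim/poly_ind: p => [|p c IH]; first by rewrite comp_poly0 !rmorph0.
rewrite comp_polyD comp_polyM comp_polyX comp_polyC !rmorphD !rmorphM /= IH.
by rewrite !horner_mx_X !horner_mx_C.
Qed.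

Lemma intertwine (F : fieldType) n (J A B : 'M[F]_n.+1) (q : {poly F}) :
  J *m A^T = B *m J -> J *m (horner_mx A q)^T = horner_mx B q *m J.
Proof.
move=> H; elim/poly_ind: q => [|q c IH]; first by rewrite !rmorph0 trmx0 mulmx0 mul0mx.
rewrite !rmorphD !rmorphM /= !horner_mx_X !horner_mx_C.
rewrite linearD /= trmx_mul tr_scalar_mx mulmxDr mulmxDl mulmxA H -mulmxA IH mulmxA.
have -> : B *m horner_mx B q = horner_mx B q *m B.
  by have := @horner_mx_comm _ _ B 'X q; rewrite horner_mx_X.
by rewrite mul_mx_scalar mul_scalar_mx.
Qed.

Arguments intertwine {F n J A B} q.

Lemma mxpowE (F : fieldType) n (A : 'M[F]_n.+1) m : mxpow A m = A ^+ m.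
Proof. by elim: m => [|m IH] //=; rewrite exprS -IH. Qed.

Lemma mat_main (F : fieldType) n (J Cf : 'M[F]_n.+1) (f p u : {poly F}) M :
  Cf *m J *m Cf^T = J -> horner_mx Cf f = 0 -> f %| p ^+ M - 'X ->
  f %| 'X * u - 1 -> f %| p * (p \Po u) - 1 ->
  exists alpha, alpha \in Sp J /\ mxpow alpha M = Cf.
Proof.
move=> HJ Hf HM Hu Hp.
set U := horner_mx Cf u.
have hX : Cf * U = 1.
  have := horner_mx_dvd Hf Hu; rewrite rmorphB rmorphM /= rmorph1 horner_mx_X.
  by move/eqP; rewrite subr_eq0 => /eqP.
have UC : U * Cf = 1.
  by have := @horner_mx_comm _ _ Cf 'X u; rewrite horner_mx_X -/U => <-.
have JC : J *m Cf^T = U *m J.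
  by rewrite -[in RHS]HJ !mulmxA; rewrite [U *m Cf]UC mul1mx.
exists (horner_mx Cf p); split.
  rewrite inE; apply/eqP.
  rewrite -mulmxA (intertwine _ JC) mulmxA -horner_mx_comp.
  have := horner_mx_dvd Hf Hp; rewrite rmorphB rmorphM /= rmorph1.
  move/eqP; rewrite subr_eq0 => /eqP E.
  have E' : horner_mx Cf p *m horner_mx Cf (p \Po u) = 1 := E.
  by rewrite E' mul1mx.
rewrite mxpowE -rmorphXn.
have := horner_mx_dvd Hf HM; rewrite rmorphB /= horner_mx_X.
by move/eqP; rewrite subr_eq0 => /eqP.
Qed.

Lemma comp_polyXn (F : fieldType) (p q : {poly F}) m :
  (p ^+ m) \Po q = (p \Po q) ^+ m.
Proof.
elim: m => [|m IH]; first by rewrite !expr0 -polyC1 comp_polyC.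
by rewrite !exprS comp_polyM IH.
Qed.

Theorem lemma5p2 (F : finFieldType) (M k : nat) (f : {poly F})
    (J : 'M[F]_(k.*2)) (Cf : 'M[F]_(k.*2)) :
  (2 <= M)%N -> (1 <= k)%N ->
  SRIM f -> size f = (k.*2).+1 ->
  (exists g : {poly F}, [/\ SRIM g, size g = (k.*2).+1 & g %| f \Po 'X^M]) ->
  nondeg_alt J ->
  Cf \in Sp J -> char_poly Cf = f ->
  exists alpha : 'M[F]_(k.*2), alpha \in Sp J /\ mxpow alpha M = Cf.
Proof.
move=> HM Hk [fm firr f0 frec] sf [g [[gm girr g0 grec] sg gdiv]] _ HCf Hchar.
have [u Hu] := inv_X f0.
have [w Hw] := inv_X g0.
have sg1 : (1 < size g)%N by rewrite sg; lia.
have KI := key_inj firr sg1 gdiv.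
set n := k.*2.
pose phi (a : {poly_n F}) : {poly_n F} := npolyp n (((val a) \Po 'X^M) %% g).
have phiE a : val (phi a) = ((val a) \Po 'X^M) %% g.
  rewrite /phi /= npolypK //; have := ltn_modp ((val a) \Po 'X^M) g.
  rewrite -size_poly_gt0 sg /= => H; rewrite -ltnS; exact: H.
have phi_inj : injective phi.
  move=> a b /(congr1 val); rewrite !phiE => E.
  have : g %| ((val a - val b) \Po 'X^M).
    by apply/modp_eq0P; rewrite comp_polyB modpD modpN E subrr.
  move/KI => Hab; apply: val_inj; apply/eqP; rewrite -subr_eq0; apply/negPn/negP => nz.
  have sa : (size (val a) <= n)%N := size_npoly a.
  have sb : (size (val b) <= n)%N := size_npoly b.
  have sab : (size (val a - val b)%R <= n)%N.
    by apply: leq_trans (size_polyD _ _) _; rewrite size_polyN geq_max sa sb.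
  by have := dvdp_leq nz Hab; rewrite sf ltnNge sab.
have [a Ha] : exists a, phi a = npolyp n 'X.
  by have /codomP [a Ha] := injF_onto phi_inj (npolyp n 'X); exists a.
have [p ep] : {p | p = val a} by eexists.
have [P eP] : {P | P = p \Po 'X^M} by eexists.
have HP : g %| P - 'X.
  have := congr1 val Ha; rewrite phiE /= npolypK; last by rewrite size_polyX /n; lia.
  rewrite -ep -eP => E; apply/dvdpP; exists (P %/ g).
  by rewrite {1}(divp_eq P g) E addrK.
have HA : f %| p ^+ M - 'X.
  apply: KI; rewrite comp_polyB comp_polyX comp_polyXn -eP.
  have := dvdp_comp ('X^M) HP; rewrite comp_Xn_poly comp_Xn_poly; exact.
have ggw := recip_dvd g0 grec Hw.
have [U eU] : {U | U = u \Po 'X^M} by eexists.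
have gU : g %| 'X^M * U - 1.
  apply: dvdp_trans gdiv _.
  by have := dvdp_compr ('X^M) Hu; rewrite comp_polyB comp_polyM comp_polyX -polyC1 comp_polyC -eU.
have h1 : g %| (p \Po w ^+ M) - w.
  apply: dvdp_trans ggw _.
  have := dvdp_compr w HP; rewrite comp_polyB comp_polyX eP -comp_polyA comp_Xn_poly //.
have h2 : g %| w ^+ M - U.
  have -> : w ^+ M - U = U * (('X * w) ^+ M - 1) - w ^+ M * ('X^M * U - 1).
    rewrite exprMn; ring.
  apply: dvdp_sub; apply: dvdp_mull => //; exact: dvdp_exp1.
have h3 := dvdp_comp p h2.
have h4 : g %| (p \Po U) - w.
  have -> : (p \Po U) - w = ((p \Po w ^+ M) - w) - ((p \Po w ^+ M) - (p \Po U)) by ring.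
  exact: dvdp_sub.
have HB : f %| p * (p \Po u) - 1.
  apply: KI; rewrite comp_polyB comp_polyM -comp_polyA -eU -eP -polyC1 comp_polyC polyC1.
  have -> : P * (p \Po U) - 1 = (P - 'X) * (p \Po U) + 'X * ((p \Po U) - w) + ('X * w - 1) by ring.
  apply: dvdp_add; [apply: dvdp_add|] => //; [apply: dvdp_mulr|apply: dvdp_mull] => //.
have [k' Ek] : exists k', k = k'.+1 by exists k.-1; rewrite prednK.
subst n; move: J Cf HCf Hchar; rewrite Ek => J Cf HCf Hchar.
have HJ : Cf *m J *m Cf^T = J by move: HCf; rewrite inE => /eqP.
have Hf : horner_mx (Cf : 'M_((k'.*2).+2)) f = 0.
  rewrite -Hchar; exact: Cayley_Hamilton.
exact: (@mat_main F (k'.*2).+1 J Cf f p u M HJ Hf HA Hu HB).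
Qed.
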